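(* For every cycle structure $x$ of an element of $S_\infty$ there exists $b\in\mathbb{N}$ such that every metacyclic subgroup $D\le S_\infty$ (finite) contains at most $b$ elements with cycle structure $x$.
   Context: $S_\infty$ is the group of permutations of $\mathbb{N}$ fixing all but finitely many elements; the cycle structure of a permutation is the non-increasing sequence of lengths of its disjoint cycles. A group is metacyclic if it has a cyclic normal subgroup with cyclic quotient. *)

(* Defs.v *)
From mathcomp Require Import all_boot all_fingroup all_solvable.
Set Implicit Arguments. Unset Strict Implicit. Unset Printing Implicit Defensive.

(* Fixed points are omitted,
   so the cycle structure of s : {perm 'I_n} equals the cycle structure of s
   viewed as an element of S_infinity (extended by the identity). *)
Definition cycle_structure (n : nat) (s : {perm 'I_n}) : seq nat :=
  sort geq [seq n' <- [seq #|(C : {set 'I_n})| | C <- enum (porbits s)] | 1 < n'].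

(* Main.v *)
Require Import Defs.
From mathcomp Require Import all_boot all_fingroup all_solvable.
Set Implicit Arguments. Unset Strict Implicit. Unset Printing Implicit Defensive.

Local Open Scope group_scope.
Definition supp (n : nat) (s : {perm 'I_n}) := [set x | s x != x].

Lemma card_bigcup_seq (T : finType) (r : seq {set T}) (P : pred {set T}) :
  #|\bigcup_(C <- r | P C) C| <= \sum_(C <- r | P C) #|C|.
Proof.
elim: r => [|C r IH]; first by rewrite !big_nil cards0.
rewrite !big_cons; case: (P C) => //.
apply: leq_trans (leq_card_setU _ _) _; by rewrite leq_add2l.
Qed.

Lemma sub_bigcup_seq (T : finType) (r : seq {set T}) (P : pred {set T}) C :
  C \in r -> P C -> C \subset \bigcup_(D <- r | P D) D.
Proof.
elim: r => [//|D r IH]; rewrite inE big_cons => /orP[/eqP<- ->|Cr PC].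
  exact: subsetUl.
case: (P D); last exact: IH.
by apply: subset_trans (IH Cr PC) _; apply: subsetUr.
Qed.

Lemma supp_cs n (s : {perm 'I_n}) : #|supp s| <= sumn (cycle_structure s).
Proof.
rewrite /cycle_structure (perm_sumn (permEl (perm_sort _ _))) sumnE big_filter big_map.
apply: leq_trans (card_bigcup_seq _ _) => /=.
apply: subset_leq_card; apply/subsetP => x; rewrite inE => sx.
apply: (subsetP (sub_bigcup_seq _ _)); last exact: porbit_id.
  by rewrite mem_enum imset_f.
rewrite /=.
have : [set x; s x] \subset porbit s x.
  by apply/subsetP => y; rewrite !inE => /orP[]/eqP->; [apply: porbit_id | rewrite -(expg1 s) mem_porbit].
by move/subset_leq_card; apply: leq_trans; rewrite cards2 eq_sym sx.
Qed.

Lemma supp_exp n (s : {perm 'I_n}) M : #|supp s| <= M -> s ^+ M`! = 1.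
Proof.
move=> hM; apply/permP => x; rewrite perm1.
case: (eqVneq (s x) x) => [fx|nfx]; first by rewrite permX_fix.
have sub : porbit s x \subset supp s.
  apply/subsetP => y /porbitP[i ->]; rewrite inE; apply: contra nfx => /eqP e.
  apply/eqP; apply: (@perm_inj _ (s ^+ i)).
  by rewrite -permM -expgS expgSr permM e.
have le := leq_trans (subset_leq_card sub) hM.
have pos : 0 < #|porbit s x| by rewrite lt0n card_porbit_neq0.
have /dvdnP[q ->] : #|porbit s x| %| M`! by apply: dvdn_fact; rewrite pos.
have hp : (s ^+ #|porbit s x|) x = x by rewrite permX iter_porbit.
rewrite mulnC expgM; elim: q => [|q IH]; first by rewrite expg0 perm1.
by rewrite expgS permM hp.
Qed.
Lemma cyc_count (gT : finGroupType) (G : {group gT}) e :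
  cyclic G -> 0 < e -> #|'Ldiv_e(G)| <= e.
Proof.
move=> cG e0; have aG := cyclic_abelian cG.
pose H := Group (group_Ldiv e aG).
have sHG : H \subset G by apply: subsetIl.
have eH := exponent_cyclic (cyclicS sHG cG).
have : exponent H %| e.
  by apply/exponentP => x /setIP[_]; rewrite inE => /eqP.
by rewrite eH => /dvdn_leq; apply.
Qed.

Lemma supp_mulV n (g h : {perm 'I_n}) : supp (g * h^-1) \subset supp g :|: supp h.
Proof.
apply/subsetP => x; rewrite !inE permM; apply: contraR.
rewrite negb_or !negbK => /andP[/eqP gx /eqP hx].
by rewrite gx -{1}hx permK.
Qed.

Theorem mainTheorem11 :
  forall (n0 : nat) (g0 : {perm 'I_n0}),
  exists b : nat,
    forall (n : nat) (D : {group {perm 'I_n}}),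
      metacyclic D ->
      #|[set g in D | cycle_structure g == cycle_structure g0]| <= b.
Proof.
move=> n0 g0; pose m := sumn (cycle_structure g0).
exists ((2 * m)`! * (2 * m)`!)%N => n D /metacyclicP[N [cN nND cQ]].
pose e := (2 * m)`!.
set S := [set g in D | _].
have nN : D \subset 'N(N) := normal_norm nND.
have Ssupp g : g \in S -> #|supp g| <= m.
  by rewrite inE => /andP[_ /eqP cs]; rewrite /m -cs supp_cs.
have SD g : g \in S -> g \in D by rewrite inE => /andP[].
have m2 : m <= 2 * m by rewrite mul2n -addnn leq_addl.
pose r (u : coset_of N) := odflt 1 [pick h in S | coset N h == u].
have rP g : g \in S -> r (coset N g) \in S /\ coset N (r (coset N g)) = coset N g.
  move=> gS; rewrite /r; case: pickP => [h /andP[hS /eqP hu] | none] //=.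
  by move: (none g); rewrite gS eqxx.
pose f g := (coset N g, g * (r (coset N g))^-1).
have finj : {in S &, injective f}.
  move=> g1 g2 _ _ [e1 e2]; rewrite /f /= e1 in e2.
  exact: mulIg e2.
have fsub : f @: S \subset setX ('Ldiv_e(D / N)) ('Ldiv_e(N)).
  apply/subsetP => _ /imsetP[g gS ->].
  have [hS hu] := rP g gS.
  have gN : g \in 'N(N) := subsetP nN g (SD g gS).
  have hN : r (coset N g) \in 'N(N) := subsetP nN _ (SD _ hS).
  rewrite !inE /= -andbA; apply/and4P; split.
  - exact: mem_quotient (SD g gS).
  - rewrite -morphX // (supp_exp (leq_trans (Ssupp g gS) m2)) morph1 //.
  - by rewrite -(mem_rcoset N (r (coset N g)) g); apply/rcoset_kercosetP; rewrite ?hu.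
  - apply/eqP/supp_exp; apply: leq_trans (subset_leq_card (supp_mulV _ _)) _.
    apply: leq_trans (leq_card_setU _ _) _.
    by rewrite mul2n -addnn leq_add // Ssupp.
rewrite -(card_in_imset finj); apply: leq_trans (subset_leq_card fsub) _.
rewrite cardsX; apply: leq_mul; apply: cyc_count; rewrite ?fact_gt0 //.
Qed.
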